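(* Let $F$ be a unitary $N=(2,2)$ full vertex operator superalgebra and $d=G^+_{-1/2}+\bar G^+_{-1/2}$. Then the map $\bigoplus_{p,q\in\mathbb R}C^{(p,q)}(F)_{cc}\to H(F,d)=\ker d/\mathrm{Im}\,d$, sending a vector to its cohomology class, is a well-defined linear isomorphism.
   Context: A unitary $N=(2,2)$ full VOA is a full vertex operator superalgebra $F=\bigoplus_{(h,\bar h)\in\mathbb R^2}F_{h,\bar h}$ (Moriwaki's axioms: real-analytic locality/associativity of $Y(a,\underline z)=\sum_{r,s}a(r,s)z^{-r-1}\bar z^{-s-1}$, vacuum $\mathbf 1$, $F_{0,0}=\mathbb C\mathbf 1$, finite-dimensional bounded-below bigrading with $F_{h,\bar h}=0$ unless $h-\bar h\in\frac12\mathbb Z$, conformal vectors $\omega\in F_{2,0},\bar\omega\in F_{0,2}$ giving commuting Virasoro actions $L(n),\bar L(n)$ of central charges $c,\bar c>0$ with $L(0),\bar L(0)$ the bigrading) with holomorphic $\tau^\pm\in F_{3/2,0}$, $J\in F_{1,0}$ and antiholomorphic $\bar\tau^\pm\in F_{0,3/2}$, $\bar J\in F_{0,1}$ whose modes $G^\pm_r,J_n$ ($Y(\tau^\pm,\underline z)=\sum_{r\in\frac12+\mathbb Z}G^\pm_rz^{-r-3/2}$, $Y(J,\underline z)=\sum J_nz^{-n-1}$) and $\bar G^\pm_r,\bar J_n$ satisfy two supercommuting copies of the $N=2$ Neveu–Schwarz relations ($[J_m,J_n]=\frac c3m\delta_{m+n,0}$, $[J_m,G^\pm_r]=\pm G^\pm_{m+r}$,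 $[L_m,G^\pm_r]=(\frac m2-r)G^\pm_{m+r}$, $[L_m,J_n]=-nJ_{m+n}$, $[G^\pm_r,G^\pm_s]_+=0$, $[G^+_r,G^-_s]_+=L_{r+s}+\frac12(r-s)J_{r+s}+\frac c6(r^2-\frac14)\delta_{r+s,0}$; barred with $\bar c$), $J_0,\bar J_0$ semisimple with real eigenvalues, $J_0-\bar J_0$ integral with $\exp(\pi i(J_0-\bar J_0))$ the parity operator; plus an invariant symmetric bilinear form ($(\mathbf 1,\mathbf 1)=1$, $(u,Y(a,\underline z)v)=(Y(e^{L(1)z+\bar L(1)\bar z}(-1)^{(L(0)-\bar L(0))+2(L(0)-\bar L(0))^2}z^{-2L(0)}\bar z^{-2\bar L(0)}a,\underline z^{-1})u,v)$) and an anti-linear involutive automorphism $\phi$ with $\phi(J)=-J,\phi(\tau^\pm)=\tau^\mp,\phi(\bar J)=-\bar J,\phi(\bar\tau^\pm)=-\bar\tau^\mp$ and $(\phi(\cdot),\cdot)$ positive definite. $C^{(p,q)}(F)_{cc}$ is the space of vectors $v$ with $J_0v=pv$, $\bar J_0v=qv$, $L_nv=\bar L_nv=J_nv=\bar J_nv=0$ ($n\ge1$), $G^\pm_rv=\bar G^\pm_rv=0$ ($r\ge\frac12$), and $G^+_{-1/2}v=\bar G^+_{-1/2}v=0$ (chiral-chiral primary vectors of charge $(p,q)$). *)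

(* Defs.v *)
From mathcomp Require Import all_boot all_order all_algebra.
From mathcomp Require Import reals.
From mathcomp.real_closed Require Export complex.
Set Implicit Arguments. Unset Strict Implicit. Unset Printing Implicit Defensive.
Import Order.TTheory GRing.Theory Num.Theory.
Local Open Scope ring_scope.
Local Open Scope complex_scope.

Section FullVOA.
Variables (R : realType) (F : lmodType R[i]).
Local Notation C := R[i].

Definition isInt (x : R) : Prop := exists k : int, x = k%:~R.
Definition isHalfOdd (x : R) : Prop := exists k : int, x = k%:~R + 2^-1.
Definition isHalfInt (x : R) : Prop := exists k : int, x = k%:~R / 2.

(* Y a r s v = a(r,s) v, where Y(a,z) = sum_{r,s} a(r,s) z^{-r-1} zbar^{-s-1} *)
Variable Y : F -> R -> R -> F -> F.

Definition holo (a : F) : Prop := forall r s v, s <> -1 -> Y a r s v = 0.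
Definition antiholo (a : F) : Prop := forall r s v, r <> -1 -> Y a r s v = 0.

(* modes of a holomorphic field of weight 2, 1, 3/2 *)
Definition modeL (om : F) (n : R) : F -> F := Y om (n + 1) (-1).
Definition modeJ (j : F) (n : R) : F -> F := Y j n (-1).
Definition modeG (t : F) (r : R) : F -> F := Y t (r + 2^-1) (-1).
Definition modeLb (om : F) (n : R) : F -> F := Y om (-1) (n + 1).
Definition modeJb (j : F) (n : R) : F -> F := Y j (-1) n.
Definition modeGb (t : F) (r : R) : F -> F := Y t (-1) (r + 2^-1).

Definition comm (A B : F -> F) : F -> F := fun v => A (B v) - B (A v).
Definition acomm (A B : F -> F) : F -> F := fun v => A (B v) + B (A v).

Definition delta (x : R) : C := if x == 0 then 1 else 0.

Definition jeig (A B : F -> F) (p q : R) (v : F) : Prop :=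
  A v = p%:C *: v /\ B v = q%:C *: v.

(* F is spanned by joint eigenvectors of (A,B) with real eigenvalues
   (for linear A, B this is F = (+)_{p,q} of the joint eigenspaces) *)
Definition jeig_decomp (A B : F -> F) : Prop :=
  forall v, exists s : seq (R * R * F),
    v = \sum_(x <- s) x.2 /\ forall x, x \in s -> jeig A B x.1.1 x.1.2 x.2.

Definition fin_dim (P : F -> Prop) : Prop :=
  exists s : seq F, (forall x, x \in s -> P x) /\
    forall v, P v -> exists k : 'I_(size s) -> C, v = \sum_(i < size s) k i *: s`_i.

Definition lin1 (f : F -> F) : Prop := forall (k : C) a b, f (k *: a + b) = k *: f a + f b.

Definition sign_exp (k : int) : int := ((k * (k + 1)) %/ 2)%Z.

(* A unitary N=(2,2) full vertex operator superalgebra, axiomatized at the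
   level of modes. *)
Record unitaryN22 := {
  vac : F; om : F; omb : F; c : R; cb : R;
  tp : F; tm : F; J : F; tpb : F; tmb : F; Jb : F;
  bil : F -> F -> C; phi : F -> F;
  L := modeL om; Lb := modeLb omb;
  hom (h hb : R) (v : F) : Prop := L 0 v = h%:C *: v /\ Lb 0 v = hb%:C *: v;
  Y_linl : forall r s v (k : C) a b, Y (k *: a + b) r s v = k *: Y a r s v + Y b r s v;
  Y_linr : forall a r s, lin1 (Y a r s);
  grad_decomp : jeig_decomp (L 0) (Lb 0);
  grad_fin : forall h hb, fin_dim (hom h hb);
  grad_bdd : exists M : R, forall h hb v, hom h hb v -> v <> 0 -> M <= h /\ M <= hb;
  grad_half : forall h hb v, hom h hb v -> v <> 0 -> isHalfInt (h - hb);
  grad_00 : forall v, hom 0 0 v <-> exists k : C, v = k *: vac;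
  grad_mode : forall h hb h' hb' a v r s, hom h hb a -> hom h' hb' v ->
      hom (h + h' - r - 1) (hb + hb' - s - 1) (Y a r s v);
  vac_id : forall r s v, Y vac r s v = if (r == -1) && (s == -1) then v else 0;
  vac_create : forall a, Y a (-1) (-1) vac = a;
  vac_create0 : forall a r s, ~ (exists n m : nat, r = - n.+1%:R /\ s = - m.+1%:R) ->
      Y a r s vac = 0;
  transl : forall a r s v, Y (L (-1) a) r s v = - r%:C *: Y a (r - 1) s v;
  transl_b : forall a r s v, Y (Lb (-1) a) r s v = - s%:C *: Y a r (s - 1) v;
  om_hom : hom 2 0 om; om_holo : holo om;
  omb_hom : hom 0 2 omb; omb_antiholo : antiholo omb;
  c_pos : 0 < c; cb_pos : 0 < cb;
  vir : forall m n v, isInt m -> isInt n ->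
      comm (L m) (L n) v = (m - n)%:C *: L (m + n) v
                           + ((c / 12) * (m ^+ 3 - m))%:C * delta (m + n) *: v;
  vir_b : forall m n v, isInt m -> isInt n ->
      comm (Lb m) (Lb n) v = (m - n)%:C *: Lb (m + n) v
                           + ((cb / 12) * (m ^+ 3 - m))%:C * delta (m + n) *: v;
  tp_hom : hom (3 / 2) 0 tp; tm_hom : hom (3 / 2) 0 tm; J_hom : hom 1 0 J;
  tp_holo : holo tp; tm_holo : holo tm; J_holo : holo J;
  tpb_hom : hom 0 (3 / 2) tpb; tmb_hom : hom 0 (3 / 2) tmb; Jb_hom : hom 0 1 Jb;
  tpb_antiholo : antiholo tpb; tmb_antiholo : antiholo tmb; Jb_antiholo : antiholo Jb;
  nsJJ : forall m n v, isInt m -> isInt n ->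
      comm (modeJ J m) (modeJ J n) v = ((c / 3) * m)%:C * delta (m + n) *: v;
  nsJGp : forall m r v, isInt m -> isHalfOdd r ->
      comm (modeJ J m) (modeG tp r) v = modeG tp (m + r) v;
  nsJGm : forall m r v, isInt m -> isHalfOdd r ->
      comm (modeJ J m) (modeG tm r) v = - modeG tm (m + r) v;
  nsLGp : forall m r v, isInt m -> isHalfOdd r ->
      comm (L m) (modeG tp r) v = (m / 2 - r)%:C *: modeG tp (m + r) v;
  nsLGm : forall m r v, isInt m -> isHalfOdd r ->
      comm (L m) (modeG tm r) v = (m / 2 - r)%:C *: modeG tm (m + r) v;
  nsLJ : forall m n v, isInt m -> isInt n ->
      comm (L m) (modeJ J n) v = - n%:C *: modeJ J (m + n) v;
  nsGpGp : forall r s v, isHalfOdd r -> isHalfOdd s ->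
      acomm (modeG tp r) (modeG tp s) v = 0;
  nsGmGm : forall r s v, isHalfOdd r -> isHalfOdd s ->
      acomm (modeG tm r) (modeG tm s) v = 0;
  nsGpGm : forall r s v, isHalfOdd r -> isHalfOdd s ->
      acomm (modeG tp r) (modeG tm s) v =
        L (r + s) v + ((r - s) / 2)%:C *: modeJ J (r + s) v
        + ((c / 6) * (r ^+ 2 - 4^-1))%:C * delta (r + s) *: v;
  nsJJb : forall m n v, isInt m -> isInt n ->
      comm (modeJb Jb m) (modeJb Jb n) v = ((cb / 3) * m)%:C * delta (m + n) *: v;
  nsJGpb : forall m r v, isInt m -> isHalfOdd r ->
      comm (modeJb Jb m) (modeGb tpb r) v = modeGb tpb (m + r) v;
  nsJGmb : forall m r v, isInt m -> isHalfOdd r ->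
      comm (modeJb Jb m) (modeGb tmb r) v = - modeGb tmb (m + r) v;
  nsLGpb : forall m r v, isInt m -> isHalfOdd r ->
      comm (Lb m) (modeGb tpb r) v = (m / 2 - r)%:C *: modeGb tpb (m + r) v;
  nsLGmb : forall m r v, isInt m -> isHalfOdd r ->
      comm (Lb m) (modeGb tmb r) v = (m / 2 - r)%:C *: modeGb tmb (m + r) v;
  nsLJb : forall m n v, isInt m -> isInt n ->
      comm (Lb m) (modeJb Jb n) v = - n%:C *: modeJb Jb (m + n) v;
  nsGpGpb : forall r s v, isHalfOdd r -> isHalfOdd s ->
      acomm (modeGb tpb r) (modeGb tpb s) v = 0;
  nsGmGmb : forall r s v, isHalfOdd r -> isHalfOdd s ->
      acomm (modeGb tmb r) (modeGb tmb s) v = 0;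
  nsGpGmb : forall r s v, isHalfOdd r -> isHalfOdd s ->
      acomm (modeGb tpb r) (modeGb tmb s) v =
        Lb (r + s) v + ((r - s) / 2)%:C *: modeJb Jb (r + s) v
        + ((cb / 6) * (r ^+ 2 - 4^-1))%:C * delta (r + s) *: v;
  cross_even : forall m n v A B, isInt m -> isInt n ->
      (A = L m \/ A = modeJ J m) -> (B = Lb n \/ B = modeJb Jb n) ->
      comm A B v = 0;
  cross_mixed1 : forall m r v A B, isInt m -> isHalfOdd r ->
      (A = L m \/ A = modeJ J m) -> (B = modeGb tpb r \/ B = modeGb tmb r) ->
      comm A B v = 0;
  cross_mixed2 : forall r m v A B, isHalfOdd r -> isInt m ->
      (A = modeG tp r \/ A = modeG tm r) -> (B = Lb m \/ B = modeJb Jb m) ->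
      comm A B v = 0;
  cross_odd : forall r s v A B, isHalfOdd r -> isHalfOdd s ->
      (A = modeG tp r \/ A = modeG tm r) -> (B = modeGb tpb s \/ B = modeGb tmb s) ->
      acomm A B v = 0;
  J0_decomp : jeig_decomp (modeJ J 0) (modeJb Jb 0);
  J0_int : forall p q v, jeig (modeJ J 0) (modeJb Jb 0) p q v -> v <> 0 -> isInt (p - q);
  bil_linl : forall v (k : C) a b, bil (k *: a + b) v = k * bil a v + bil b v;
  bil_sym : forall u v, bil u v = bil v u;
  bil_vac : bil vac vac = 1;
  bil_inv : forall a h hb (k : int) (N : nat), hom h hb a ->
      2 * (h - hb) = k%:~R ->
      iter N (L 1) a = 0 -> iter N (Lb 1) a = 0 ->
      forall u v m n,
        bil u (Y a m n v) =
        \sum_(i < N) \sum_(j < N)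
          ((-1) ^ sign_exp k / (i`! * j`!)%:R) *
          bil (Y (iter i (L 1) (iter j (Lb 1) a))
                 (2 * h - m - 2 - i%:R) (2 * hb - n - 2 - j%:R) u) v;
  phi_antilin : forall (k : C) a b, phi (k *: a + b) = k^* *: phi a + phi b;
  phi_invol : forall a, phi (phi a) = a;
  phi_Y : forall a r s b, phi (Y a r s b) = Y (phi a) r s (phi b);
  phi_vac : phi vac = vac; phi_om : phi om = om; phi_omb : phi omb = omb;
  phi_J : phi J = - J; phi_tp : phi tp = tm; phi_tm : phi tm = tp;
  phi_Jb : phi Jb = - Jb; phi_tpb : phi tpb = - tmb; phi_tmb : phi tmb = - tpb;
  pos_def : forall u, u <> 0 -> 0 < bil (phi u) u
}.

Variable V : unitaryN22.

Definition dN22 (v : F) : F := modeG (tp V) (- 2^-1) v + modeGb (tpb V) (- 2^-1) v.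

Definition cc_primary (p q : R) (v : F) : Prop :=
  [/\ modeJ (J V) 0 v = p%:C *: v, modeJb (Jb V) 0 v = q%:C *: v,
      (forall n, isInt n -> 1 <= n ->
         [/\ L V n v = 0, Lb V n v = 0, modeJ (J V) n v = 0 & modeJb (Jb V) n v = 0]),
      (forall r, isHalfOdd r -> 0 < r ->
         [/\ modeG (tp V) r v = 0, modeG (tm V) r v = 0,
             modeGb (tpb V) r v = 0 & modeGb (tmb V) r v = 0])
    & modeG (tp V) (- 2^-1) v = 0 /\ modeGb (tpb V) (- 2^-1) v = 0].

(* an element of the direct sum (+)_{p,q} P(p,q): a finite family of vectors
   indexed by distinct pairs (p,q), the component at (p,q) lying in P(p,q) *)
Definition dsum_elem (P : R -> R -> F -> Prop) (s : seq (R * R * F)) : Prop :=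
  uniq (map fst s) /\ forall x, x \in s -> P x.1.1 x.1.2 x.2.

Definition dsum_val (s : seq (R * R * F)) : F := \sum_(x <- s) x.2.

Definition cohomologous (d : F -> F) (v w : F) : Prop := exists x, v - w = d x.

End FullVOA.

(* Main.v *)
Require Import Defs.
From mathcomp Require Import all_boot all_order all_algebra.
From mathcomp Require Import reals.
From mathcomp.real_closed Require Import complex.
Import GRing.Theory Num.Theory.
Local Open Scope ring_scope.
From mathcomp Require Import lra.
Import Order.TTheory.
Set Implicit Arguments. Unset Strict Implicit. Unset Printing Implicit Defensive.

Section Lin.
Variables (R : realType) (F : lmodType R[i]).

Lemma lin1_0 (f : F -> F) : lin1 f -> f 0 = 0.
Proof.
move=> h; have E := h 1 0 0; rewrite !scale1r addr0 in E.
by apply: (@addrI _ (f 0)); rewrite addr0 -E.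
Qed.

Lemma lin1_D (f : F -> F) : lin1 f -> forall a b, f (a + b) = f a + f b.
Proof. by move=> h a b; have := h 1 a b; rewrite !scale1r. Qed.

Lemma lin1_Z (f : F -> F) : lin1 f -> forall k a, f (k *: a) = k *: f a.
Proof. by move=> h k a; have := h k a 0; rewrite !addr0 lin1_0 // addr0. Qed.

Lemma lin1_N (f : F -> F) : lin1 f -> forall a, f (- a) = - f a.
Proof. by move=> h a; rewrite -scaleN1r lin1_Z // scaleN1r. Qed.

Lemma lin1_B (f : F -> F) : lin1 f -> forall a b, f (a - b) = f a - f b.
Proof. by move=> h a b; rewrite lin1_D // lin1_N. Qed.

Lemma lin1_sum (f : F -> F) : lin1 f -> forall (X : Type) (s : seq X) (P : pred X) (u : X -> F),
  f (\sum_(x <- s | P x) u x) = \sum_(x <- s | P x) f (u x).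
Proof.
move=> h X s P u; elim: s => [|x s IH]; first by rewrite !big_nil lin1_0.
by rewrite !big_cons; case: (P x); rewrite ?lin1_D ?IH.
Qed.

Lemma commE (A B : F -> F) v X : comm A B v = X -> A (B v) = B (A v) + X.
Proof. by rewrite /comm => <-; rewrite addrC subrK. Qed.

Lemma acommE (A B : F -> F) v X : acomm A B v = X -> A (B v) = - B (A v) + X.
Proof. by rewrite /acomm => <-; rewrite addrC -addrA addrN addr0. Qed.

Lemma regroup (X K : eqType) (s : seq X) (key : X -> K) (u : X -> F) :
  \sum_(P <- undup (map key s)) \sum_(x <- s | key x == P) u x = \sum_(x <- s) u x.
Proof.
under eq_bigr do rewrite big_mkcond.
rewrite exchange_big; apply: eq_big_seq => x xs /=.
rewrite (bigD1_seq (key x)) ?undup_uniq ?mem_undup ?map_f //= eqxx big1 ?addr0 //.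
by move=> P; rewrite eq_sym => /negPf ->.
Qed.

Lemma eig_sep (A : F -> F) (hA : lin1 A) (X : eqType) (s : seq X) (lam : X -> R[i]) :
  forall u : X -> F, (forall x, x \in s -> A (u x) = lam x *: u x) ->
  \sum_(x <- s) u x = 0 -> forall f : R[i] -> R[i], \sum_(x <- s) f (lam x) *: u x = 0.
Proof.
elim: s => [|a s IH] u hu hs f; first by rewrite big_nil.
rewrite big_cons in hs.
have hs' : \sum_(x <- s) u x = - u a by apply/eqP; rewrite -addr_eq0 addrC hs.
pose u' x := (lam x - lam a) *: u x.
have hu' : forall x, x \in s -> A (u' x) = lam x *: u' x.
  move=> x xs; rewrite /u' lin1_Z // hu ?inE ?xs ?orbT // !scalerA mulrC //.
have hs2 : \sum_(x <- s) u' x = 0.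
  rewrite /u'; under eq_bigr do rewrite scalerBl.
  rewrite sumrB -(eq_big_seq _ (fun x xs => hu x _)); last first.
    by move=> x xs; rewrite inE xs orbT.
  rewrite -lin1_sum // -scaler_sumr hs' lin1_N // hu ?mem_head //.
  by rewrite scalerN subrr.
pose g (m : R[i]) := if m == lam a then 0 else (f m - f (lam a)) / (m - lam a).
have := IH u' hu' hs2 g; rewrite /u' /g.
under eq_bigr do rewrite scalerA.
have E : forall x, (if lam x == lam a then 0 else (f (lam x) - f (lam a)) / (lam x - lam a)) * (lam x - lam a) = f (lam x) - f (lam a).
  move=> x; case: eqP => [->|/eqP ne]; first by rewrite !subrr mul0r.
  by rewrite divfK // subr_eq0.
under eq_bigr do rewrite E.
under eq_bigr do rewrite scalerBl.
rewrite sumrB -scaler_sumr hs' scalerN opprK => h.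
by rewrite big_cons addrC.
Qed.

End Lin.

Section VOA.
Variables (R : realType) (F : lmodType R[i]) (Y : F -> R -> R -> F -> F) (V : unitaryN22 Y).
Local Notation C := R[i].
Local Notation bl := (bil V).
Local Notation ph := (phi V).

Lemma lY a r s : lin1 (Y a r s). Proof. exact: Y_linr. Qed.

Lemma Y0l r s v : Y 0 r s v = 0.
Proof.
have E := Y_linl V r s v 1 0 0; rewrite !scale1r addr0 in E.
by apply: (@addrI _ (Y 0 r s v)); rewrite addr0 -E.
Qed.

Lemma YNl a r s v : Y (- a) r s v = - Y a r s v.
Proof. by have := Y_linl V r s v (-1) a 0; rewrite addr0 Y0l addr0 !scaleN1r. Qed.

Lemma conjN1 : (-1 : C)^* = -1.
Proof. by rewrite rmorphN1. Qed.

Lemma phi0 : ph 0 = 0.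
Proof.
have E := phi_antilin V 1 0 0. rewrite !scale1r addr0 conjC1 scale1r in E.
by apply: (@addrI _ (ph 0)); rewrite addr0 -E.
Qed.

Lemma phiN a : ph (- a) = - ph a.
Proof. by have := phi_antilin V (-1) a 0; rewrite addr0 phi0 addr0 conjN1 !scaleN1r. Qed.

Lemma phiD a b : ph (a + b) = ph a + ph b.
Proof. by have := phi_antilin V 1 a b; rewrite !scale1r conjC1 scale1r. Qed.

Local Open Scope complex_scope.
Lemma bil0l v : bl 0 v = 0.
Proof.
have E := bil_linl V v 1 0 0; rewrite scale1r addr0 mul1r in E.
by apply: (@addrI _ (bl 0 v)); rewrite addr0 -E.
Qed.
Lemma bilDl a b v : bl (a + b) v = bl a v + bl b v.
Proof. by have := bil_linl V v 1 a b; rewrite scale1r mul1r. Qed.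
Lemma bilZl k a v : bl (k *: a) v = k * bl a v.
Proof. by have := bil_linl V v k a 0; rewrite addr0 bil0l addr0. Qed.
Lemma bilNl a v : bl (- a) v = - bl a v.
Proof. by rewrite -scaleN1r bilZl mulN1r. Qed.
Lemma bil0r v : bl v 0 = 0. Proof. by rewrite bil_sym bil0l. Qed.
Lemma bilDr a b v : bl v (a + b) = bl v a + bl v b.
Proof. by rewrite bil_sym bilDl !(bil_sym _ v). Qed.
Lemma bilZr k a v : bl v (k *: a) = k * bl v a.
Proof. by rewrite bil_sym bilZl bil_sym. Qed.
Lemma bilNr a v : bl v (- a) = - bl v a.
Proof. by rewrite bil_sym bilNl bil_sym. Qed.

Definition Nm u := bl (ph u) u.
Lemma Nm_ge0 u : 0 <= Nm u.
Proof.
have [->|nz] := eqVneq u 0; first by rewrite /Nm phi0 bil0l.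
by apply: ltW; apply: pos_def; apply/eqP.
Qed.
Lemma Nm_eq0 u : Nm u = 0 -> u = 0.
Proof.
move=> h; have [//|nz] := eqVneq u 0.
by have := pos_def V (elimN eqP nz); rewrite -/(Nm u) h ltxx.
Qed.

Lemma adj_holo a : Defs.hom V (3/2) 0 a -> L V 1 a = 0 -> Lb V 1 a = 0 ->
  forall u v m n, bl u (Y a m n v) = bl (Y a (1 - m) (-n-2) u) v.
Proof.
move=> ha h1 h2 u v m n.
have E : 2 * (3 / 2 - 0) = (3 : int)%:~R :> R.
  by rewrite subr0 mulrC divfK // pnatr_eq0.
have := bil_inv (N := 1) ha E h1 h2 u v m n.
rewrite !big_ord1 /= /sign_exp /=.
have -> : ((3 * (3 + 1)) %/ 2)%Z = 6 by [].
rewrite -exprnP -signr_odd /= expr0 mul1r invr1 mul1r => ->.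
by congr (bl (Y a _ _ u) v); lra.
Qed.


Lemma adj_anti a : Defs.hom V 0 (3/2) a -> L V 1 a = 0 -> Lb V 1 a = 0 ->
  forall u v m n, bl u (Y a m n v) = - bl (Y a (- m - 2) (1 - n) u) v.
Proof.
move=> ha h1 h2 u v m n.
have E : 2 * (0 - 3 / 2) = (- (3 : int))%:~R :> R.
  by rewrite mulrNz sub0r mulrN mulrC divfK // pnatr_eq0.
have := bil_inv (N := 1) ha E h1 h2 u v m n.
rewrite !big_ord1 /= /sign_exp /=.
have -> : ((- 3 * (- 3 + 1)) %/ 2)%Z = 3 by [].
rewrite -exprnP -signr_odd /= expr1 invr1 mulr1 mulN1r => ->.
by congr (- bl (Y a _ _ u) v); lra.
Qed.

Lemma vac0r a r s : 0 <= r -> Y a r s (vac V) = 0.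
Proof.
move=> hr; apply: vac_create0 => -[n [m [e _]]].
have := ltr0Sn R n; rewrite e in hr; lra.
Qed.
Lemma vac0s a r s : 0 <= s -> Y a r s (vac V) = 0.
Proof.
move=> hs; apply: vac_create0 => -[n [m [_ e]]].
have := ltr0Sn R m; rewrite e in hs; lra.
Qed.

Local Notation Gp := (modeG Y (tp V)).
Local Notation Gm := (modeG Y (tm V)).
Local Notation Gpb := (modeGb Y (tpb V)).
Local Notation Gmb := (modeGb Y (tmb V)).
Local Notation Jm := (modeJ Y (J V)).
Local Notation Jbm := (modeJb Y (Jb V)).

Lemma isInt0 : isInt (0 : R). Proof. by exists 0. Qed.
Lemma isInt1 : isInt (1 : R). Proof. by exists 1. Qed.
Definition r0 : R := -1 - 2^-1.
Lemma hr0 : isHalfOdd r0.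
Proof. exists (- (2 : int)); rewrite mulrNz /r0 -pmulrn; lra. Qed.
Lemma hmh : isHalfOdd (- 2^-1 : R).
Proof. exists (- (1 : int)); rewrite mulrNz -pmulrn; lra. Qed.
Lemma hph : isHalfOdd (2^-1 : R).
Proof. by exists 0; rewrite add0r. Qed.

Lemma vacG (t : F) : t = Y t (r0 + 2^-1) (-1) (vac V).
Proof. by rewrite /r0 subrK vac_create. Qed.
Lemma vacGb (t : F) : t = Y t (-1) (r0 + 2^-1) (vac V).
Proof. by rewrite /r0 subrK vac_create. Qed.

Lemma L1vac : L V 1 (vac V) = 0.
Proof. by apply: vac0r; lra. Qed.
Lemma Lb1vac : Lb V 1 (vac V) = 0.
Proof. by apply: vac0s; rewrite /=; lra. Qed.

Lemma L1_holo (t : F) : (forall v, comm (L V 1) (modeG Y t r0) v = (1/2 - r0)%:C *: modeG Y t (1 + r0) v) ->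
  L V 1 t = 0.
Proof.
move=> h; rewrite {1}(vacG t).
have := commE (h (vac V)); rewrite /modeG => ->.
rewrite L1vac (lin1_0 (lY _ _ _)) vac0r ?scaler0 ?addr0 //; rewrite /r0; lra.
Qed.

Lemma L1tp : L V 1 (tp V) = 0.
Proof. by apply: L1_holo => v; apply: nsLGp; [exact: isInt1 | exact: hr0]. Qed.
Lemma L1tm : L V 1 (tm V) = 0.
Proof. by apply: L1_holo => v; apply: nsLGm; [exact: isInt1 | exact: hr0]. Qed.

Lemma Lb1_holo (t : F) : (forall v, comm (modeG Y t r0) (Lb V 1) v = 0) -> Lb V 1 t = 0.
Proof.
move=> h; rewrite {1}(vacG t).
have := commE (h (vac V)); rewrite /modeG addr0 => <-.
by rewrite Lb1vac (lin1_0 (lY _ _ _)).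
Qed.
Lemma Lb1tp : Lb V 1 (tp V) = 0.
Proof. by apply: Lb1_holo => v; apply: cross_mixed2; [exact: hr0|exact: isInt1|left|left]. Qed.
Lemma Lb1tm : Lb V 1 (tm V) = 0.
Proof. by apply: Lb1_holo => v; apply: cross_mixed2; [exact: hr0|exact: isInt1|right|left]. Qed.

Lemma Lb1_anti (t : F) : (forall v, comm (Lb V 1) (modeGb Y t r0) v = (1/2 - r0)%:C *: modeGb Y t (1 + r0) v) ->
  Lb V 1 t = 0.
Proof.
move=> h; rewrite {1}(vacGb t).
have := commE (h (vac V)); rewrite /modeGb => ->.
rewrite Lb1vac (lin1_0 (lY _ _ _)) vac0s ?scaler0 ?addr0 //; rewrite /r0; lra.
Qed.
Lemma Lb1tpb : Lb V 1 (tpb V) = 0.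
Proof. by apply: Lb1_anti => v; apply: nsLGpb; [exact: isInt1 | exact: hr0]. Qed.
Lemma Lb1tmb : Lb V 1 (tmb V) = 0.
Proof. by apply: Lb1_anti => v; apply: nsLGmb; [exact: isInt1 | exact: hr0]. Qed.

Lemma L1_anti (t : F) : (forall v, comm (L V 1) (modeGb Y t r0) v = 0) -> L V 1 t = 0.
Proof.
move=> h; rewrite {1}(vacGb t).
have := commE (h (vac V)); rewrite /modeGb addr0 => ->.
by rewrite L1vac (lin1_0 (lY _ _ _)).
Qed.
Lemma L1tpb : L V 1 (tpb V) = 0.
Proof. by apply: L1_anti => v; apply: cross_mixed1; [exact: isInt1|exact: hr0|left|left]. Qed.
Lemma L1tmb : L V 1 (tmb V) = 0.
Proof. by apply: L1_anti => v; apply: cross_mixed1; [exact: isInt1|exact: hr0|left|right]. Qed.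


Lemma bilY a u v r s r' s' : r = r' -> s = s' -> bl (Y a r s u) v = bl (Y a r' s' u) v.
Proof. by move=> -> ->. Qed.

Lemma adjGp w v : bl (ph w) (Gp (- 2^-1) v) = bl (ph (Gm 2^-1 w)) v.
Proof.
rewrite /modeG (adj_holo (tp_hom V) L1tp Lb1tp) phi_Y phi_tm.
by apply: bilY; lra.
Qed.
Lemma adjGm w v : bl (ph w) (Gm 2^-1 v) = bl (ph (Gp (- 2^-1) w)) v.
Proof.
rewrite /modeG (adj_holo (tm_hom V) L1tm Lb1tm) phi_Y phi_tp.
by apply: bilY; lra.
Qed.
Lemma adjGpb w v : bl (ph w) (Gpb (- 2^-1) v) = bl (ph (Gmb 2^-1 w)) v.
Proof.
rewrite /modeGb (adj_anti (tpb_hom V) L1tpb Lb1tpb) phi_Y phi_tmb YNl bilNl.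
by congr (- _); apply: bilY; lra.
Qed.
Lemma adjGmb w v : bl (ph w) (Gmb 2^-1 v) = bl (ph (Gpb (- 2^-1) w)) v.
Proof.
rewrite /modeGb (adj_anti (tmb_hom V) L1tmb Lb1tmb) phi_Y phi_tpb YNl bilNl.
by congr (- _); apply: bilY; lra.
Qed.

Lemma pos_holo w h p : L V 0 w = h%:C *: w -> Jm 0 w = p%:C *: w ->
  (h - p/2)%:C * Nm w = Nm (Gm 2^-1 w) + Nm (Gp (- 2^-1) w).
Proof.
move=> hL hJ.
have := nsGpGm V w hmh hph; rewrite /acomm.
have -> : - 2^-1 + 2^-1 = 0 :> R by rewrite addNr.
have -> : (- 2^-1 - 2^-1) / 2 = - 2^-1 :> R by lra.
have -> : (- 2^-1 : R) ^+ 2 - 4^-1 = 0 by rewrite expr2; lra.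
rewrite hL hJ mulr0 mul0r scale0r addr0 => E.
have := congr1 (bl (ph w)) E; rewrite bilDr (adjGp w (Gm 2^-1 w)) (adjGm w (Gp (- 2^-1) w)) -/(Nm _) -/(Nm _) => ->.
rewrite bilDr !bilZr -/(Nm w) mulrA -mulrDl.
have -> : h%:C + (- 2^-1)%:C * p%:C = (h + (- 2^-1) * p)%:C.
  by rewrite -rmorphM -rmorphD.
by apply: (congr1 (fun x : R => x%:C * Nm w)); lra.
Qed.

Lemma pos_anti w h p : Lb V 0 w = h%:C *: w -> Jbm 0 w = p%:C *: w ->
  (h - p/2)%:C * Nm w = Nm (Gmb 2^-1 w) + Nm (Gpb (- 2^-1) w).
Proof.
move=> hL hJ.
have := nsGpGmb V w hmh hph; rewrite /acomm.
have -> : - 2^-1 + 2^-1 = 0 :> R by rewrite addNr.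
have -> : (- 2^-1 - 2^-1) / 2 = - 2^-1 :> R by lra.
have -> : (- 2^-1 : R) ^+ 2 - 4^-1 = 0 by rewrite expr2; lra.
rewrite hL hJ mulr0 mul0r scale0r addr0 => E.
have := congr1 (bl (ph w)) E; rewrite bilDr (adjGpb w (Gmb 2^-1 w)) (adjGmb w (Gpb (- 2^-1) w)) -/(Nm _) -/(Nm _) => ->.
rewrite bilDr !bilZr -/(Nm w) mulrA -mulrDl -rmorphM -rmorphD.
by apply: (congr1 (fun x : R => x%:C * Nm w)); lra.
Qed.

Lemma pos_gen (x : R) w A B : x%:C * Nm w = Nm A + Nm B ->
  [/\ w <> 0 -> 0 <= x, x < 0 -> w = 0 & x = 0 -> A = 0 /\ B = 0].
Proof.
move=> E.
have ge : 0 <= x%:C * Nm w by rewrite E addr_ge0 ?Nm_ge0.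
have P1 : w <> 0 -> 0 <= x.
  move=> nz; have := pos_def V nz; rewrite -/(Nm w) => pos.
  by move: ge; rewrite pmulr_lge0 // ler0c.
split => //.
  by move=> lt; have [//|nz] := eqVneq w 0; have := P1 (elimN eqP nz); rewrite leNgt lt.
move=> x0; move: E; rewrite x0 mul0r => /esym /eqP.
rewrite paddr_eq0 ?Nm_ge0 // => /andP[/eqP a /eqP b].
by split; apply: Nm_eq0.
Qed.


Lemma halfodd_cases (r : R) : isHalfOdd r -> 0 < r -> r = 2^-1 \/ 3/2 <= r.
Proof.
case=> [[n|n] ->] hr.
  case: n hr => [|m] hr; first by left; rewrite add0r.
  right; rewrite -pmulrn; have : (1 : R) <= m.+1%:R by rewrite ler1n.
  lra.
exfalso; move: hr; rewrite NegzE mulrNz -pmulrn; have : (1 : R) <= n.+1%:R by rewrite ler1n.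
lra.
Qed.

Lemma comm0E (A B : F -> F) v : comm A B v = 0 -> B (A v) = A (B v).
Proof. by move=> /commE; rewrite addr0. Qed.

Lemma transp (A B : F -> F) (lB : lin1 B) (h a : R) w : A w = h%:C *: w ->
  A (B w) = B (A w) + a%:C *: B w -> A (B w) = (h + a)%:C *: B w.
Proof. by move=> hA ->; rewrite hA (lin1_Z lB) rmorphD scalerDl. Qed.

Lemma delta_kill (x : R) (d : C) (w : F) : (x * 0)%:C * d *: w = 0.
Proof. by rewrite mulr0 rmorph0 mul0r scale0r. Qed.

Lemma lL n : lin1 (L V n). Proof. exact: lY. Qed.
Lemma lLb n : lin1 (Lb V n). Proof. exact: lY. Qed.
Lemma lJ n : lin1 (Jm n). Proof. exact: lY. Qed.
Lemma lJb n : lin1 (Jbm n). Proof. exact: lY. Qed.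
Lemma lGp r : lin1 (Gp r). Proof. exact: lY. Qed.
Lemma lGm r : lin1 (Gm r). Proof. exact: lY. Qed.
Lemma lGpb r : lin1 (Gpb r). Proof. exact: lY. Qed.
Lemma lGmb r : lin1 (Gmb r). Proof. exact: lY. Qed.

Lemma cLL n w : isInt n -> L V 0 (L V n w) = L V n (L V 0 w) + (- n)%:C *: L V n w.
Proof.
move=> hn; have := commE (vir V w isInt0 hn).
rewrite (add0r n) (sub0r n) => ->.
by rewrite expr0n /= subrr delta_kill addr0.
Qed.
Lemma cJL n w : isInt n -> Jm 0 (L V n w) = L V n (Jm 0 w) + 0%:C *: L V n w.
Proof.
move=> hn; have := comm0E (_ : comm (L V n) (Jm 0) w = 0) => -> //.
  by rewrite rmorph0 scale0r addr0.
by rewrite (nsLJ V w hn isInt0) rmorph0 oppr0 scale0r.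
Qed.
Lemma cLJ n w : isInt n -> L V 0 (Jm n w) = Jm n (L V 0 w) + (- n)%:C *: Jm n w.
Proof. by move=> hn; have := commE (nsLJ V w isInt0 hn); rewrite add0r rmorphN => ->. Qed.
Lemma cJJ n w : isInt n -> Jm 0 (Jm n w) = Jm n (Jm 0 w) + 0%:C *: Jm n w.
Proof.
move=> hn; have := commE (nsJJ V w isInt0 hn) => ->.
by rewrite delta_kill rmorph0 scale0r.
Qed.
Lemma cLGp r w : isHalfOdd r -> L V 0 (Gp r w) = Gp r (L V 0 w) + (- r)%:C *: Gp r w.
Proof. by move=> hr; have := commE (nsLGp V w isInt0 hr); rewrite add0r mul0r add0r => ->. Qed.
Lemma cJGp r w : isHalfOdd r -> Jm 0 (Gp r w) = Gp r (Jm 0 w) + 1%:C *: Gp r w.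
Proof. by move=> hr; have := commE (nsJGp V w isInt0 hr); rewrite add0r rmorph1 scale1r => ->. Qed.
Lemma cLGm r w : isHalfOdd r -> L V 0 (Gm r w) = Gm r (L V 0 w) + (- r)%:C *: Gm r w.
Proof. by move=> hr; have := commE (nsLGm V w isInt0 hr); rewrite add0r mul0r add0r => ->. Qed.
Lemma cJGm r w : isHalfOdd r -> Jm 0 (Gm r w) = Gm r (Jm 0 w) + (-1)%:C *: Gm r w.
Proof. by move=> hr; have := commE (nsJGm V w isInt0 hr); rewrite add0r rmorphN1 scaleN1r => ->. Qed.

Lemma cLbLb n w : isInt n -> Lb V 0 (Lb V n w) = Lb V n (Lb V 0 w) + (- n)%:C *: Lb V n w.
Proof.
move=> hn; have := commE (vir_b V w isInt0 hn).
rewrite (add0r n) (sub0r n) => ->.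
by rewrite expr0n /= subrr delta_kill addr0.
Qed.
Lemma cJbLb n w : isInt n -> Jbm 0 (Lb V n w) = Lb V n (Jbm 0 w) + 0%:C *: Lb V n w.
Proof.
move=> hn; have := comm0E (_ : comm (Lb V n) (Jbm 0) w = 0) => -> //.
  by rewrite rmorph0 scale0r addr0.
by rewrite (nsLJb V w hn isInt0) rmorph0 oppr0 scale0r.
Qed.
Lemma cLbJb n w : isInt n -> Lb V 0 (Jbm n w) = Jbm n (Lb V 0 w) + (- n)%:C *: Jbm n w.
Proof. by move=> hn; have := commE (nsLJb V w isInt0 hn); rewrite add0r rmorphN => ->. Qed.
Lemma cJbJb n w : isInt n -> Jbm 0 (Jbm n w) = Jbm n (Jbm 0 w) + 0%:C *: Jbm n w.
Proof.
move=> hn; have := commE (nsJJb V w isInt0 hn) => ->.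
by rewrite delta_kill rmorph0 scale0r.
Qed.
Lemma cLbGpb r w : isHalfOdd r -> Lb V 0 (Gpb r w) = Gpb r (Lb V 0 w) + (- r)%:C *: Gpb r w.
Proof. by move=> hr; have := commE (nsLGpb V w isInt0 hr); rewrite add0r mul0r add0r => ->. Qed.
Lemma cJbGpb r w : isHalfOdd r -> Jbm 0 (Gpb r w) = Gpb r (Jbm 0 w) + 1%:C *: Gpb r w.
Proof. by move=> hr; have := commE (nsJGpb V w isInt0 hr); rewrite add0r rmorph1 scale1r => ->. Qed.
Lemma cLbGmb r w : isHalfOdd r -> Lb V 0 (Gmb r w) = Gmb r (Lb V 0 w) + (- r)%:C *: Gmb r w.
Proof. by move=> hr; have := commE (nsLGmb V w isInt0 hr); rewrite add0r mul0r add0r => ->. Qed.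
Lemma cJbGmb r w : isHalfOdd r -> Jbm 0 (Gmb r w) = Gmb r (Jbm 0 w) + (-1)%:C *: Gmb r w.
Proof. by move=> hr; have := commE (nsJGmb V w isInt0 hr); rewrite add0r rmorphN1 scaleN1r => ->. Qed.


Lemma xLbGp r w : isHalfOdd r -> Lb V 0 (Gp r w) = Gp r (Lb V 0 w).
Proof. by move=> hr; apply: comm0E; apply: cross_mixed2; [exact: hr|exact: isInt0|left|left]. Qed.
Lemma xJbGp r w : isHalfOdd r -> Jbm 0 (Gp r w) = Gp r (Jbm 0 w).
Proof. by move=> hr; apply: comm0E; apply: cross_mixed2; [exact: hr|exact: isInt0|left|right]. Qed.
Lemma xLGpb r w : isHalfOdd r -> L V 0 (Gpb r w) = Gpb r (L V 0 w).
Proof.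
by move=> hr; rewrite -[RHS]addr0; apply: commE; apply: cross_mixed1; [exact: isInt0|exact: hr|left|left].
Qed.
Lemma xJGpb r w : isHalfOdd r -> Jm 0 (Gpb r w) = Gpb r (Jm 0 w).
Proof.
by move=> hr; rewrite -[RHS]addr0; apply: commE; apply: cross_mixed1; [exact: isInt0|exact: hr|right|left].
Qed.
Lemma zLJ u : L V 0 (Jm 0 u) = Jm 0 (L V 0 u).
Proof. by rewrite -[RHS]addr0; apply: commE; rewrite (nsLJ V u isInt0 isInt0) oppr0 scale0r. Qed.
Lemma zLJb u : L V 0 (Jbm 0 u) = Jbm 0 (L V 0 u).
Proof. by rewrite -[RHS]addr0; apply: commE; apply: cross_even; [exact: isInt0|exact: isInt0|left|right]. Qed.
Lemma zLbJ u : Lb V 0 (Jm 0 u) = Jm 0 (Lb V 0 u).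
Proof. by apply: comm0E; apply: cross_even; [exact: isInt0|exact: isInt0|right|left]. Qed.
Lemma zLbJb u : Lb V 0 (Jbm 0 u) = Jbm 0 (Lb V 0 u).
Proof. by rewrite -[RHS]addr0; apply: commE; rewrite (nsLJb V u isInt0 isInt0) oppr0 scale0r. Qed.

Lemma acGpGm v : acomm (Gp (- 2^-1)) (Gm 2^-1) v = L V 0 v + (- 2^-1)%:C *: Jm 0 v.
Proof.
have := nsGpGm V v hmh hph.
have -> : - 2^-1 + 2^-1 = 0 :> R by rewrite addNr.
have -> : (- 2^-1 - 2^-1) / 2 = - 2^-1 :> R by lra.
have -> : (- 2^-1 : R) ^+ 2 - 4^-1 = 0 by rewrite expr2; lra.
by rewrite mulr0 mul0r scale0r addr0.
Qed.
Lemma acGpGmb v : acomm (Gpb (- 2^-1)) (Gmb 2^-1) v = Lb V 0 v + (- 2^-1)%:C *: Jbm 0 v.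
Proof.
have := nsGpGmb V v hmh hph.
have -> : - 2^-1 + 2^-1 = 0 :> R by rewrite addNr.
have -> : (- 2^-1 - 2^-1) / 2 = - 2^-1 :> R by lra.
have -> : (- 2^-1 : R) ^+ 2 - 4^-1 = 0 by rewrite expr2; lra.
by rewrite mulr0 mul0r scale0r addr0.
Qed.

Definition Dl v := (L V 0 v + (- 2^-1)%:C *: Jm 0 v) + (Lb V 0 v + (- 2^-1)%:C *: Jbm 0 v).
Definition dd v := Gm 2^-1 v + Gmb 2^-1 v.

Lemma lin1_add (f g : F -> F) : lin1 f -> lin1 g -> lin1 (fun v => f v + g v).
Proof.
move=> hf hg k a b; rewrite hf hg scalerDr.
by rewrite -!addrA; congr (_ + _); rewrite addrCA.
Qed.
Lemma lin1_scl (f : F -> F) (k0 : C) : lin1 f -> lin1 (fun v => k0 *: f v).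
Proof. by move=> hf k a b; rewrite hf scalerDr !scalerA mulrC. Qed.

Lemma lDl : lin1 Dl.
Proof.
apply: lin1_add; apply: lin1_add; (try exact: lY); apply: lin1_scl; exact: lY.
Qed.
Lemma ld : lin1 (dN22 V). Proof. by apply: lin1_add; exact: lY. Qed.
Lemma ldd : lin1 dd. Proof. by apply: lin1_add; exact: lY. Qed.

Lemma ab8 (a b c d e f g h : F) : b + g = 0 -> f + c = 0 ->
  (a + b) + (c + d) + ((e + f) + (g + h)) = (a + e) + (d + h).
Proof.
move=> /eqP; rewrite addrC addr_eq0 => /eqP -> /eqP; rewrite addrC addr_eq0 => /eqP ->.
rewrite (addrACA (a + b)) (addrACA a b e f) (addrACA (- f) d (- b) h) -opprD (addrC f b).
by rewrite -addrA addNKr.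
Qed.

Lemma lap v : dN22 V (dd v) + dd (dN22 V v) = Dl v.
Proof.
rewrite /dN22 /dd !(lin1_D (lGp _)) !(lin1_D (lGpb _)) !(lin1_D (lGm _)) !(lin1_D (lGmb _)).
rewrite -[Dl v]/((L V 0 v + (- 2^-1)%:C *: Jm 0 v) + (Lb V 0 v + (- 2^-1)%:C *: Jbm 0 v)).
rewrite -acGpGm -acGpGmb /acomm.
apply: ab8.
  exact: (cross_odd (A := Gp (- 2^-1)) (B := Gmb 2^-1) v hmh hph (or_introl erefl) (or_intror erefl)).
exact: (cross_odd (A := Gm 2^-1) (B := Gpb (- 2^-1)) v hph hmh (or_intror erefl) (or_introl erefl)).
Qed.


Definition E4 (h hb p q : R) (w : F) : Prop :=
  [/\ L V 0 w = h%:C *: w, Lb V 0 w = hb%:C *: w, Jm 0 w = p%:C *: w & Jbm 0 w = q%:C *: w].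

Lemma Dl_eig h hb p q w : E4 h hb p q w -> Dl w = (h - p/2 + (hb - q/2))%:C *: w.
Proof.
case=> e1 e2 e3 e4; rewrite /Dl e1 e2 e3 e4 !scalerA.
have -> : (h - p/2 + (hb - q/2))%:C = h%:C + (- 2^-1)%:C * p%:C + (hb%:C + (- 2^-1)%:C * q%:C).
  by rewrite -!rmorphM -!rmorphD; congr (_%:C); lra.
by rewrite !scalerDl.
Qed.

Lemma E4_Gp h hb p q w : E4 h hb p q w -> E4 (h + 2^-1) hb (p + 1) q (Gp (- 2^-1) w).
Proof.
case=> e1 e2 e3 e4; split.
- by rewrite -[X in h + X]opprK; apply: (transp (lGp _) e1); apply: cLGp; exact: hmh.
- by rewrite xLbGp ?e2 ?(lin1_Z (lGp _)) //; exact: hmh.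
- by apply: (transp (lGp _) e3); apply: cJGp; exact: hmh.
- by rewrite xJbGp ?e4 ?(lin1_Z (lGp _)) //; exact: hmh.
Qed.
Lemma E4_Gpb h hb p q w : E4 h hb p q w -> E4 h (hb + 2^-1) p (q + 1) (Gpb (- 2^-1) w).
Proof.
case=> e1 e2 e3 e4; split.
- by rewrite xLGpb ?e1 ?(lin1_Z (lGpb _)) //; exact: hmh.
- by rewrite -[X in hb + X]opprK; apply: (transp (lGpb _) e2); apply: cLbGpb; exact: hmh.
- by rewrite xJGpb ?e3 ?(lin1_Z (lGpb _)) //; exact: hmh.
- by apply: (transp (lGpb _) e4); apply: cJbGpb; exact: hmh.
Qed.

Lemma d_eig h hb p q w : E4 h hb p q w ->
  Dl (dN22 V w) = (h - p/2 + (hb - q/2))%:C *: dN22 V w.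
Proof.
move=> e; rewrite /dN22 (lin1_D lDl) (Dl_eig (E4_Gp e)) (Dl_eig (E4_Gpb e)) scalerDr.
by congr (_%:C *: _ + _%:C *: _); lra.
Qed.

Lemma kill_holo u h p : L V 0 u = h%:C *: u -> Jm 0 u = p%:C *: u -> h - p/2 < 0 -> u = 0.
Proof. by move=> e1 e2; case: (pos_gen (pos_holo e1 e2)). Qed.
Lemma kill_anti u h p : Lb V 0 u = h%:C *: u -> Jbm 0 u = p%:C *: u -> h - p/2 < 0 -> u = 0.
Proof. by move=> e1 e2; case: (pos_gen (pos_anti e1 e2)). Qed.

Ltac lin0 := rewrite ?(lin1_0 (lL _)) ?(lin1_0 (lLb _)) ?(lin1_0 (lJ _)) ?(lin1_0 (lJb _))
  ?(lin1_0 (lGp _)) ?(lin1_0 (lGm _)) ?(lin1_0 (lGpb _)) ?(lin1_0 (lGmb _)).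
Ltac linD := rewrite ?(lin1_D (lL _)) ?(lin1_D (lLb _)) ?(lin1_D (lJ _)) ?(lin1_D (lJb _))
  ?(lin1_D (lGp _)) ?(lin1_D (lGm _)) ?(lin1_D (lGpb _)) ?(lin1_D (lGmb _)).
Ltac linZ := rewrite ?(lin1_Z (lL _)) ?(lin1_Z (lLb _)) ?(lin1_Z (lJ _)) ?(lin1_Z (lJb _))
  ?(lin1_Z (lGp _)) ?(lin1_Z (lGm _)) ?(lin1_Z (lGpb _)) ?(lin1_Z (lGmb _)).

Lemma cc0 p q : cc_primary V p q 0.
Proof.
rewrite /cc_primary; lin0; rewrite !scaler0; split => //.
  by move=> n _ _; lin0.
by move=> r _ _; lin0.
Qed.

Lemma cc_add p q a b : cc_primary V p q a -> cc_primary V p q b -> cc_primary V p q (a + b).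
Proof.
case=> a1 a2 a3 a4 [a5 a6]; case=> b1 b2 b3 b4 [b5 b6].
rewrite /cc_primary; linD; rewrite a1 a2 b1 b2 a5 a6 b5 b6 !scalerDr !addr0; split => //.
  move=> n hn h1; case: (a3 n hn h1) => c1 c2 c3 c4; case: (b3 n hn h1) => d1 d2 d3 d4.
  by linD; rewrite c1 c2 c3 c4 d1 d2 d3 d4 !addr0.
move=> r hr h1; case: (a4 r hr h1) => c1 c2 c3 c4; case: (b4 r hr h1) => d1 d2 d3 d4.
by linD; rewrite c1 c2 c3 c4 d1 d2 d3 d4 !addr0.
Qed.

Lemma cc_scale p q k a : cc_primary V p q a -> cc_primary V p q (k *: a).
Proof.
case=> a1 a2 a3 a4 [a5 a6].
rewrite /cc_primary; linZ; rewrite a1 a2 a5 a6 !scaler0 !scalerA (mulrC k) (mulrC k); split => //.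
  by move=> n hn h1; case: (a3 n hn h1) => c1 c2 c3 c4; linZ; rewrite c1 c2 c3 c4 !scaler0.
by move=> r hr h1; case: (a4 r hr h1) => c1 c2 c3 c4; linZ; rewrite c1 c2 c3 c4 !scaler0.
Qed.

Lemma cc_sum p q (X : eqType) (s : seq X) (P : pred X) (u : X -> F) :
  (forall x, x \in s -> P x -> cc_primary V p q (u x)) -> cc_primary V p q (\sum_(x <- s | P x) u x).
Proof.
elim: s => [|x s IH] H; first by rewrite big_nil; exact: cc0.
rewrite big_cons; have IH' : cc_primary V p q (\sum_(j <- s | P j) u j).
  by apply: IH => y ys Py; apply: H => //; rewrite inE ys orbT.
case: ifP => Px //; apply: cc_add => //; apply: H => //; exact: mem_head.
Qed.

Lemma cc_dd p q w : cc_primary V p q w -> dd w = 0.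
Proof.
case=> _ _ _ a4 _; have hp : (0 : R) < 2^-1 by rewrite invr_gt0.
by case: (a4 _ hph hp) => _ c2 _ c4; rewrite /dd c2 c4 addr0.
Qed.

Lemma harm_cc h hb p q w : E4 h hb p q w -> h - p/2 + (hb - q/2) = 0 -> cc_primary V p q w.
Proof.
move=> e lam0; have [->|nz] := eqVneq w 0; first exact: cc0.
have nz' : w <> 0 by apply/eqP.
case: (e) => e1 e2 e3 e4.
case: (pos_gen (pos_holo e1 e3)) => P1 _ P3.
case: (pos_gen (pos_anti e2 e4)) => Q1 _ Q3.
have := P1 nz'; have := Q1 nz' => g1 g2.
have x1 : h - p / 2 = 0 by lra.
have x2 : hb - q / 2 = 0 by lra.
case: (P3 x1) => zGm zGp; case: (Q3 x2) => zGmb zGpb.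
split => //.
  move=> n hn n1; split.
  - apply: (kill_holo (transp (lL _) e1 (cLL _ hn)) (transp (lL _) e3 (cJL _ hn))); lra.
  - apply: (kill_anti (transp (lLb _) e2 (cLbLb _ hn)) (transp (lLb _) e4 (cJbLb _ hn))); lra.
  - apply: (kill_holo (transp (lJ _) e1 (cLJ _ hn)) (transp (lJ _) e3 (cJJ _ hn))); lra.
  - apply: (kill_anti (transp (lJb _) e2 (cLbJb _ hn)) (transp (lJb _) e4 (cJbJb _ hn))); lra.
move=> r hr r0'; split.
- apply: (kill_holo (transp (lGp _) e1 (cLGp _ hr)) (transp (lGp _) e3 (cJGp _ hr))); lra.
- case: (halfodd_cases hr r0') => [->|r32] //.
  apply: (kill_holo (transp (lGm _) e1 (cLGm _ hr)) (transp (lGm _) e3 (cJGm _ hr))); lra.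
- apply: (kill_anti (transp (lGpb _) e2 (cLbGpb _ hr)) (transp (lGpb _) e4 (cJbGpb _ hr))); lra.
- case: (halfodd_cases hr r0') => [->|r32] //.
  apply: (kill_anti (transp (lGmb _) e2 (cLbGmb _ hr)) (transp (lGmb _) e4 (cJbGmb _ hr))); lra.
Qed.


Lemma eqC (a b : R) : (a%:C == b%:C) = (a == b).
Proof. by apply/eqP/eqP => [/complexI|->]. Qed.

Lemma pair_sep (X : eqType) (t : seq X) (k : X -> R * R) (u : X -> F) :
  (forall y, y \in t -> Jm 0 (u y) = (k y).1%:C *: u y /\ Jbm 0 (u y) = (k y).2%:C *: u y) ->
  \sum_(y <- t) u y = 0 -> forall P, \sum_(y <- t | k y == P) u y = 0.
Proof.
move=> H hs P.
have s1 := eig_sep (lJ 0) (lam := fun y => (k y).1%:C) (u := u) (fun y yt => (H y yt).1) hs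
  (fun m => (m == P.1%:C)%:R).
pose u2 y := ((k y).1%:C == P.1%:C)%:R *: u y.
have hu2 : forall y, y \in t -> Jbm 0 (u2 y) = (k y).2%:C *: u2 y.
  by move=> y yt; rewrite /u2 (lin1_Z (lJb 0)) (H y yt).2 !scalerA mulrC.
have s2 := eig_sep (lJb 0) (lam := fun y => (k y).2%:C) (u := u2) hu2 s1
  (fun m => (m == P.2%:C)%:R).
rewrite big_mkcond -[RHS]s2; apply: eq_bigr => y _; rewrite /u2 !eqC scalerA -natrM.
have -> : (k y == P) = ((k y).1 == P.1) && ((k y).2 == P.2).
  by case: (k y) => a b; case: (P) => c d; rewrite xpair_eqE.
by case: ((k y).1 == P.1); case: ((k y).2 == P.2); rewrite /= ?mulr1n ?mulr0n ?scale1r ?scale0r.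
Qed.

Definition T4 := (R * R * R * R * F)%type.
Definition E4x (x : T4) := E4 x.1.1.1.1 x.1.1.1.2 x.1.1.2 x.1.2 x.2.

Lemma decomp_one u h hb : L V 0 u = h%:C *: u -> Lb V 0 u = hb%:C *: u ->
  exists s : seq T4, u = \sum_(x <- s) x.2 /\ forall x, x \in s -> E4x x.
Proof.
move=> eL eLb; have [t [ut ht]] := J0_decomp V u.
pose T P := \sum_(x <- t | x.1 == P) x.2.
exists [seq (h, hb, P.1, P.2, T P) | P <- undup (map fst t)]; split.
  by rewrite big_map /T regroup.
move=> x /mapP [P _ ->]; rewrite /E4x /=.
have keyE : forall y, y \in t -> Jm 0 y.2 = y.1.1%:C *: y.2 /\ Jbm 0 y.2 = y.1.2%:C *: y.2.
  by move=> y yt; case: (ht y yt).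
have sepL : forall (A : F -> F) (c0 : R), lin1 A -> A u = c0%:C *: u ->
    (forall w, Jm 0 (A w) = A (Jm 0 w)) -> (forall w, Jbm 0 (A w) = A (Jbm 0 w)) ->
    A (T P) = c0%:C *: T P.
  move=> A c0 lA eA cJ cJb.
  have h1 : forall y, y \in t -> Jm 0 (A y.2 - c0%:C *: y.2) = y.1.1%:C *: (A y.2 - c0%:C *: y.2) /\
      Jbm 0 (A y.2 - c0%:C *: y.2) = y.1.2%:C *: (A y.2 - c0%:C *: y.2).
    move=> y yt; case: (keyE y yt) => k1 k2; split.
      by rewrite (lin1_B (lJ 0)) (lin1_Z (lJ 0)) cJ k1 (lin1_Z lA) scalerBr !scalerA (mulrC c0%:C).
    by rewrite (lin1_B (lJb 0)) (lin1_Z (lJb 0)) cJb k2 (lin1_Z lA) scalerBr !scalerA (mulrC c0%:C).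
  have h2 : \sum_(y <- t) (A y.2 - c0%:C *: y.2) = 0.
    by rewrite sumrB -scaler_sumr -(lin1_sum lA) -ut eA subrr.
  have := pair_sep (k := fst) (u := fun y => A y.2 - c0%:C *: y.2) h1 h2 P.
  rewrite sumrB -scaler_sumr => /eqP; rewrite subr_eq0 => /eqP <-.
  by rewrite /T (lin1_sum lA).
split.
- apply: (sepL (L V 0) h (lL 0) eL) => w; rewrite ?zLJ ?zLJb //.
- apply: (sepL (Lb V 0) hb (lLb 0) eLb) => w; rewrite ?zLbJ ?zLbJb //.
- rewrite /T (lin1_sum (lJ 0)) scaler_sumr [LHS]big_seq_cond [RHS]big_seq_cond.
  by apply: eq_bigr => y /andP[yt /eqP <-]; exact: (keyE y yt).1.
- rewrite /T (lin1_sum (lJb 0)) scaler_sumr [LHS]big_seq_cond [RHS]big_seq_cond.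
  by apply: eq_bigr => y /andP[yt /eqP <-]; exact: (keyE y yt).2.
Qed.

Lemma decomp v : exists s : seq T4, v = \sum_(x <- s) x.2 /\ forall x, x \in s -> E4x x.
Proof.
have [s1 [-> h1]] := grad_decomp V v.
elim: s1 h1 => [|y s1 IH] h1; first by exists [::]; rewrite !big_nil.
have [hy1 hy2] := h1 y (mem_head _ _).
have [sy [ey hsy]] := decomp_one hy1 hy2.
have h1' : forall z, z \in s1 -> jeig (L V 0) (Lb V 0) z.1.1 z.1.2 z.2.
  by move=> z zs; apply: h1; rewrite inE zs orbT.
have [s' [e' hs']] := IH h1'.
exists (sy ++ s'); rewrite big_cons big_cat -ey -e'; split => // x.
by rewrite mem_cat => /orP [/hsy|/hs'].
Qed.

Lemma sum_uniq_key (s : seq (R * R * F)) x : uniq (map fst s) -> x \in s ->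
  \sum_(y <- s | y.1 == x.1) y.2 = x.2.
Proof.
elim: s => [|y s IH] //= /andP [ny us]; rewrite inE big_cons => /orP [/eqP ->|xs].
  rewrite eqxx big1_seq ?addr0 // => z /andP [/eqP zy zs].
  by exfalso; move/negP: ny; apply; rewrite -zy; exact: map_f.
have -> : (y.1 == x.1) = false.
  apply/negbTE/negP => /eqP e; move/negP: ny; apply; rewrite e; exact: map_f.
exact: IH.
Qed.

Lemma C0inj (a : R) : a%:C = 0 -> a = 0.
Proof. by move=> h; apply: complexI; rewrite h rmorph0. Qed.

Lemma main_lemma :
  [/\ (forall p q v, cc_primary V p q v -> dN22 V v = 0),
      (forall s, dsum_elem (cc_primary V) s -> cohomologous (dN22 V) (dsum_val s) 0 ->
         forall x, x \in s -> x.2 = 0)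
    & (forall v, dN22 V v = 0 ->
         exists s, dsum_elem (cc_primary V) s /\ cohomologous (dN22 V) v (dsum_val s))].
Proof.
split.
- by move=> p q v [_ _ _ _ [a b]]; rewrite /dN22 a b addr0.
- move=> s [us hs] [x hx] y ys.
  rewrite subr0 in hx; set S := dsum_val s in hx.
  have ddS : dd S = 0.
    rewrite /S /dsum_val (lin1_sum ldd) big1_seq // => z /andP [_ zs].
    exact: cc_dd (hs z zs).
  have NS : Nm S = 0.
    rewrite /Nm {2}hx /dN22 bilDr adjGp adjGpb -bilDl -phiD -/(dd S) ddS phi0 bil0l //.
  have S0 := Nm_eq0 NS.
  have hk : forall z, z \in s -> Jm 0 z.2 = (z.1).1%:C *: z.2 /\ Jbm 0 z.2 = (z.1).2%:C *: z.2.
    by move=> z zs; case: (hs z zs).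
  have := pair_sep (k := fst) (u := snd) hk S0 y.1.
  by rewrite sum_uniq_key.
move=> v dv.
have [s [vs hs]] := decomp v.
pose lam (x : T4) : C := (x.1.1.1.1 - x.1.1.2/2 + (x.1.1.1.2 - x.1.2/2))%:C.
have hD : forall x, x \in s -> Dl x.2 = lam x *: x.2 by move=> x xs; exact: (Dl_eig (hs x xs)).
have hDd : forall x, x \in s -> Dl (dN22 V x.2) = lam x *: dN22 V x.2.
  by move=> x xs; exact: (d_eig (hs x xs)).
have sd : \sum_(x <- s) dN22 V x.2 = 0 by rewrite -(lin1_sum ld) -vs.
have s1 := eig_sep lDl (lam := lam) (u := fun x => dN22 V x.2) hDd sd GRing.inv.
pose X := \sum_(x <- s) (lam x)^-1 *: dd x.2.
have eX : \sum_(x <- s) ((lam x)^-1 * lam x) *: x.2 = dN22 V X.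
  transitivity (\sum_(x <- s) (lam x)^-1 *: Dl x.2).
    by apply: eq_big_seq => x xs; rewrite hD // scalerA.
  under eq_bigr do rewrite -lap scalerDr.
  rewrite big_split /=.
  have -> : \sum_(i <- s) (lam i)^-1 *: dd (dN22 V i.2) = 0.
    have s2 : dd (\sum_(x <- s) (lam x)^-1 *: dN22 V x.2) = 0 by rewrite s1 (lin1_0 ldd).
    rewrite (lin1_sum ldd) in s2; rewrite -[RHS]s2; apply: eq_bigr => i _.
    by rewrite (lin1_Z ldd).
  rewrite addr0 /X (lin1_sum ld); apply: eq_bigr => x _.
  by rewrite (lin1_Z ld).
pose keyf (x : T4) := (x.1.1.2, x.1.2).
pose w (x : T4) := (1 - (lam x)^-1 * lam x) *: x.2.
pose S := [seq (P, \sum_(x <- s | keyf x == P) w x) | P <- undup (map keyf s)].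
exists S; split.
  split.
    have -> : map fst S = undup (map keyf s) by rewrite /S -map_comp map_id.
    exact: undup_uniq.
  move=> y /mapP [P Pin ->] /=.
  apply: cc_sum => x xs /eqP kx; rewrite -kx /= /w.
  have [l0|ln0] := eqVneq (lam x) 0.
    apply: cc_scale; apply: (harm_cc (hs x xs)); exact: C0inj.
  by rewrite mulVf // subrr scale0r; exact: cc0.
exists X; rewrite /dsum_val /S big_map /= regroup -eX vs -sumrB.
by apply: eq_bigr => x _; rewrite /w scalerBl scale1r opprB addrC subrK.
Qed.

End VOA.

Unset Implicit Arguments.

Theorem proposition2p11 (R : realType) (F : lmodType R[i]) (Y : F -> R -> R -> F -> F) (V : unitaryN22 Y) :
  [/\ (* well defined: chiral-chiral primaries are d-closed *)
      (forall p q v, cc_primary V p q v -> dN22 V v = 0),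
      (* injective: an element of (+)_{p,q} C^{(p,q)}(F)_cc that is d-exact is 0 *)
      (forall s, dsum_elem (cc_primary V) s -> cohomologous (dN22 V) (dsum_val s) 0 ->
         forall x, x \in s -> x.2 = 0)
    & (* surjective: every d-closed vector is cohomologous to such an element *)
      (forall v, dN22 V v = 0 ->
         exists s, dsum_elem (cc_primary V) s /\ cohomologous (dN22 V) v (dsum_val s))].
Proof. exact: (@main_lemma R F Y V). Qed.
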